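(* For every finite field $\mathbb{F}_q$, the unit-graph on $\operatorname{Mat}_2(\mathbb{F}_q)$ is strongly regular.
   Context: The unit-graph on $\operatorname{Mat}_2(\mathbb{F}_q)$ is the graph with vertex set $\operatorname{Mat}_2(\mathbb{F}_q)$ in which $A$ and $B$ are adjacent iff $B - A \in \operatorname{GL}_2(\mathbb{F}_q)$. A non-empty, non-complete regular graph is strongly regular with parameters $(n,k,a,c)$ if it has $n$ vertices, is $k$-regular, every pair of distinct adjacent vertices has exactly $a$ common neighbours, and every pair of distinct nonadjacent vertices has exactly $c$ common neighbours. *)

(* Defs.v *)
From mathcomp Require Import all_boot all_algebra all_field.
Set Implicit Arguments. Unset Strict Implicit. Unset Printing Implicit Defensive.
Import GRing.Theory.
Local Open Scope ring_scope.

Definition srg_params (T : finType) (e : rel T) (n k a c : nat) : Prop :=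
  [/\ symmetric e, irreflexive e,
      (exists x y, e x y) &
      (exists x y, x != y /\ ~~ e x y)] /\
  [/\ #|T| = n,
      (forall x, #|[set y | e x y]| = k),
      (forall x y, x != y -> e x y -> #|[set z | e x z && e y z]| = a) &
      (forall x y, x != y -> ~~ e x y -> #|[set z | e x z && e y z]| = c)].

Definition strongly_regular (T : finType) (e : rel T) : Prop :=
  exists n k a c : nat, srg_params e n k a c.

Definition unit_graph (F : finFieldType) : rel 'M[F]_2 :=
  fun A B => (B - A) \in unitmx.
Arguments unit_graph F : clear implicits.

(* Main.v *)
Require Import Defs.
From mathcomp Require Import all_boot all_algebra all_field.
Set Implicit Arguments. Unset Strict Implicit. Unset Printing Implicit Defensive.
Import GRing.Theory.
Local Open Scope ring_scope.

Section S.
Variable F : finFieldType.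

Definition cnt (D : 'M[F]_2) := #|[set Z : 'M[F]_2 | (Z \in unitmx) && ((Z - D) \in unitmx)]|.

Lemma cntPQ (P Q D : 'M[F]_2) : P \in unitmx -> Q \in unitmx ->
  cnt (P *m D *m Q) = cnt D.
Proof.
move=> uP uQ.
have inj : injective (fun Z : 'M[F]_2 => P *m Z *m Q).
  move=> X Y /(congr1 (mulmx^~ (invmx Q))); rewrite !mulmxK //.
  by move=> /(congr1 (mulmx (invmx P))); rewrite !mulKmx.
rewrite /cnt -(card_preimset _ inj); apply: eq_card => Z.
by rewrite !inE -mulmxBl -mulmxBr !unitmx_mul uP uQ !andbT.
Qed.

Lemma cnt_rank (D : 'M[F]_2) : cnt D = cnt (pid_mx (\rank D)).
Proof.
by rewrite -{1}(mulmx_ebase D) cntPQ // ?col_ebase_unit ?row_ebase_unit.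
Qed.

Lemma common (x y : 'M[F]_2) :
  #|[set z | unit_graph F x z && unit_graph F y z]| = cnt (y - x).
Proof.
rewrite /cnt -(card_preimset _ (addIr x)); apply: eq_card => z.
by rewrite !inE /unit_graph addrK opprB addrA.
Qed.

Lemma nbrs (x : 'M[F]_2) :
  #|[set y | unit_graph F x y]| = #|[set y : 'M[F]_2 | y \in unitmx]|.
Proof.
rewrite -(card_preimset _ (addIr x)); apply: eq_card => z.
by rewrite !inE /unit_graph addrK.
Qed.

End S.

Theorem corollary3p4 (F : finFieldType) : strongly_regular (unit_graph F).
Proof.
have r1 : \rank (pid_mx 1 : 'M[F]_2) = 1%N by rewrite rank_pid_mx.
have p1n0 : (pid_mx 1 : 'M[F]_2) != 0 by rewrite -mxrank_eq0 r1.
have p1nu : (pid_mx 1 : 'M[F]_2) \notin unitmx.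
  by rewrite -row_free_unit /row_free r1.
have rk : forall D : 'M[F]_2, D != 0 -> \rank D = (if D \in unitmx then 2 else 1)%N.
  move=> D nz; case: ifP => u; first by apply: mxrank_unit.
  have := rank_leq_row D; rewrite -mxrank_eq0 in nz.
  move: u; rewrite -row_free_unit /row_free.
  by case: (\rank D) nz => [|[|[|]]].
exists #|'M[F]_2|, #|[set y : 'M[F]_2 | y \in unitmx]|,
  (cnt (pid_mx 2 : 'M[F]_2)), (cnt (pid_mx 1 : 'M[F]_2)).
split; split => //.
- by move=> A B; rewrite /unit_graph -opprB -scaleN1r unitmxZ // unitrN1.
- by move=> A; rewrite /unit_graph subrr unitmxE det0 unitr0.
- by exists 0, 1%:M; rewrite /unit_graph subr0 unitmx1.
- exists 0, (pid_mx 1); split; first by rewrite eq_sym.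
  by rewrite /unit_graph subr0.
- by move=> x; apply: nbrs.
- move=> x y nxy exy; rewrite common cnt_rank rk; last by rewrite subr_eq0 eq_sym.
  by move: exy; rewrite /unit_graph => ->.
- move=> x y nxy exy; rewrite common cnt_rank rk; last by rewrite subr_eq0 eq_sym.
  by move: exy; rewrite /unit_graph => /negbTE ->.
Qed.
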